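(* Let $A\in\mathbb{R}^{n\times n}$ be monotone, let $A=P_1-R_1+S_1$ be a double weak regular splitting and $A=P_2-R_2+S_2$ a double regular splitting of $A$. Suppose $1\notin\sigma(S_2P_1^{-1})$, $\widehat{A}^{-1}\geq 0$ where $\widehat{A}=(I-S_2P_1^{-1})A$, $P_1^{-1}R_1\geq P_2^{-1}R_2$ and $P_2^{-1}S_2\geq P_1^{-1}S_1$. Then $\rho(W_{12})\leq\min\{\rho(T_1),\rho(T_2)\}<1$, where $$W_{12}=\begin{pmatrix} P_2^{-1}R_2-P_2^{-1}S_2P_1^{-1}R_1 & P_2^{-1}S_2P_1^{-1}S_1\\ I & 0\end{pmatrix},\qquad T_i=\begin{pmatrix} P_i^{-1}R_i & -P_i^{-1}S_i\\ I&0\end{pmatrix}\ (i=1,2).$$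
   Context: Inequalities are entrywise; $\rho$ is the spectral radius, $\sigma$ the spectrum. $A$ is monotone if $A$ is nonsingular and $A^{-1}\geq 0$. A double splitting $A=P-R+S$ with $P$ nonsingular is a double regular splitting if $P^{-1}\geq0$, $R\geq0$, $S\leq0$, and a double weak regular splitting if $P^{-1}\geq 0$, $P^{-1}R\geq0$, $P^{-1}S\leq0$. *)

(* Defs.v *)
From HB Require Import structures.
From mathcomp Require Import all_boot all_order all_algebra.
From mathcomp Require Import complex.
Set Implicit Arguments. Unset Strict Implicit. Unset Printing Implicit Defensive.
Import Order.TTheory GRing.Theory Num.Theory.
Local Open Scope ring_scope.

Definition mxle (R : numDomainType) m n (A B : 'M[R]_(m, n)) : Prop :=
  forall i j, A i j <= B i j.

Definition monotone (R : numFieldType) n (A : 'M[R]_n) : Prop :=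
  A \in unitmx /\ mxle 0 (invmx A).

Definition cplx_mx (R : rcfType) m n (A : 'M[R]_(m, n)) : 'M[R[i]]_(m, n) :=
  map_mx (real_complex R) A.

Definition spectrum (R : rcfType) n (A : 'M[R]_n) : pred R[i] :=
  [pred z | eigenvalue (cplx_mx A) z].

Definition spectral_radius (R : rcfType) n (A : 'M[R]_n) : R :=
  \big[Num.max/0]_(z <- sval (closed_field_poly_normal (char_poly (cplx_mx A))))
     complex.Re `|z|.

Definition double_splitting (F : numFieldType) n (A P R S : 'M[F]_n) : Prop :=
  A = P - R + S /\ P \in unitmx.

Definition double_regular_splitting (F : numFieldType) n (A P R S : 'M[F]_n) : Prop :=
  double_splitting A P R S /\ mxle 0 (invmx P) /\ mxle 0 R /\ mxle S 0.

Definition double_weak_regular_splitting (F : numFieldType) n (A P R S : 'M[F]_n) : Prop :=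
  double_splitting A P R S /\ mxle 0 (invmx P) /\ mxle 0 (invmx P *m R)
  /\ mxle (invmx P *m S) 0.

(* Main.v *)
Require Import Defs.
From HB Require Import structures.
From mathcomp Require Import all_boot all_order all_algebra.
From mathcomp Require Import complex.
From mathcomp Require Import polyrcf.
From mathcomp Require Import ring lra.
Set Implicit Arguments. Unset Strict Implicit. Unset Printing Implicit Defensive.
Import Order.TTheory GRing.Theory Num.Theory.
Local Open Scope ring_scope.

Section Basic.
Variable R : realFieldType.

Definition nnm m n (A : 'M[R]_(m, n)) := forall i j, 0 <= A i j.
Definition Zmx n (M : 'M[R]_n) := forall i j, i != j -> M i j <= 0.

Lemma mxle0E m n (A : 'M[R]_(m, n)) : mxle 0 A <-> nnm A.
Proof. by split=> h i j; move: (h i j); rewrite mxE. Qed.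

Lemma mxleE m n (A B : 'M[R]_(m, n)) : mxle A B <-> nnm (B - A).
Proof. by split=> h i j; move: (h i j); rewrite !mxE subr_ge0. Qed.

Lemma nnm_mul m n p (A : 'M[R]_(m, n)) (B : 'M[R]_(n, p)) :
  nnm A -> nnm B -> nnm (A *m B).
Proof. by move=> hA hB i j; rewrite mxE sumr_ge0 // => k _; rewrite mulr_ge0. Qed.

Lemma nnm_add m n (A B : 'M[R]_(m, n)) : nnm A -> nnm B -> nnm (A + B).
Proof. by move=> hA hB i j; rewrite mxE addr_ge0. Qed.

Lemma nnm_scale m n (a : R) (A : 'M[R]_(m, n)) : 0 <= a -> nnm A -> nnm (a *: A).
Proof. by move=> ha hA i j; rewrite mxE mulr_ge0. Qed.

Lemma nnm0 m n : nnm (0 : 'M[R]_(m, n)).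
Proof. by move=> i j; rewrite mxE. Qed.

Lemma nnm1 n : nnm (1%:M : 'M[R]_n).
Proof. by move=> i j; rewrite mxE ler0n. Qed.

Lemma nnm_opp_le m n (A : 'M[R]_(m, n)) : mxle A 0 <-> nnm (- A).
Proof. by rewrite mxleE sub0r. Qed.

Lemma nnm_anti m n (A : 'M[R]_(m, n)) : nnm A -> nnm (- A) -> A = 0.
Proof.
move=> h1 h2; apply/matrixP=> i j; rewrite mxE; apply/le_anti.
by rewrite h1 andbT; move: (h2 i j); rewrite mxE oppr_ge0.
Qed.

Lemma mono_kill n (M : 'M[R]_n) k (x : 'M[R]_(k, n)) :
  monotone M -> nnm x -> nnm (- (x *m M)) -> x = 0.
Proof.
case=> Mu /mxle0E Mi hx hxM; apply: nnm_anti => //.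
have -> : - x = (- (x *m M)) *m invmx M by rewrite mulNmx -mulmxA mulmxV // mulmx1.
exact: nnm_mul.
Qed.

End Basic.


Section MinPrinc.
Variable R : realFieldType.

Lemma zmin n (M : 'M[R]_n) (u : 'cV[R]_n) k (V : 'M[R]_(n, k)) :
  Zmx M -> (forall i, 0 < u i 0) -> (forall i, 0 < (M *m u) i 0) ->
  nnm (M *m V) -> nnm V.
Proof.
move=> hZ hu hMu hMV i j; rewrite leNgt; apply/negP => Vneg.
pose F l := V l j / u l 0.
have [i0 _ hmin] := @arg_minP _ R _ i predT F isT.
set c := F i0 in hmin.
have cneg : c < 0.
  apply: (le_lt_trans (hmin i isT)); rewrite /F pmulr_llt0 ?invr_gt0 //.
have hge : forall l, c * u l 0 <= V l j.
  move=> l; have := hmin l isT; rewrite /F ler_pdivlMr //.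
have hc0 : V i0 j = c * u i0 0 by rewrite /c /F divfK // gt_eqF.
have key : (M *m V) i0 j - c * (M *m u) i0 0 =
           \sum_l M i0 l * (V l j - c * u l 0).
  rewrite !mxE mulr_sumr -sumrB; apply: eq_bigr => l _; ring.
have : \sum_l M i0 l * (V l j - c * u l 0) <= 0.
  apply: sumr_le0 => l _; have [->|ne] := eqVneq l i0.
    by rewrite hc0 subrr mulr0.
  by rewrite mulr_le0_ge0 ?hZ 1?eq_sym // subr_ge0 hge.
rewrite -key subr_le0 => h.
have : c * (M *m u) i0 0 < 0 by rewrite pmulr_llt0.
move: (hMV i0 j) h; lra.
Qed.

Lemma zmin_mono n (M : 'M[R]_n) (u : 'cV[R]_n) :
  Zmx M -> (forall i, 0 < u i 0) -> (forall i, 0 < (M *m u) i 0) ->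
  monotone M.
Proof.
move=> hZ hu hMu.
have Mu : M \in unitmx.
  rewrite unitmxE unitfE -det_tr; apply/negP => /det0P [v vn0].
  move/(congr1 trmx); rewrite trmx_mul trmxK trmx0 => hv.
  have h1 : nnm (M *m v^T) by rewrite hv; apply: nnm0.
  have h2 : nnm (M *m (- v^T)) by rewrite mulmxN hv oppr0; apply: nnm0.
  have := zmin hZ hu hMu h1; have := zmin hZ hu hMu h2 => a b.
  move/negP: vn0; apply; apply/eqP.
  have : v^T = 0 by apply: nnm_anti.
  by move/(congr1 trmx); rewrite trmxK trmx0.
split=> //; apply/mxle0E; apply: (zmin hZ hu hMu).
by rewrite mulmxV //; apply: nnm1.
Qed.

End MinPrinc.


Local Notation noroot p := (forall x, ~~ root p x).

Lemma foldr_max_mem (R : realDomainType) (x0 : R) s :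
  (foldr Num.max x0 s == x0) || (foldr Num.max x0 s \in s).
Proof.
elim: s => [|x s IH] /=; first by rewrite eqxx.
rewrite in_cons; have [h|h] := leP x (foldr Num.max x0 s).
  by case/orP: IH => -> //; rewrite !orbT.
by rewrite eqxx orbT.
Qed.

Lemma foldr_max_ub (R : realDomainType) (x0 : R) s y :
  y \in s -> y <= foldr Num.max x0 s.
Proof.
elim: s => [|x s IH] //=; rewrite in_cons => /orP[/eqP ->|/IH h].
  by rewrite le_max lexx.
by rewrite le_max h orbT.
Qed.

Lemma foldr_max_lb (R : realDomainType) (x0 : R) s : x0 <= foldr Num.max x0 s.
Proof. by elim: s => [|x s IH] //=; rewrite le_max IH orbT. Qed.

Section Cont.
Variables (R : rcfType) (n : nat) (M2 M1 M0 : 'M[R]_n).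

Definition Cf (s : R) : 'M[R]_n := s ^+ 2 *: M2 + s *: M1 + M0.
Definition Cp : 'M[{poly R}]_n :=
  \matrix_(i, j) (M2 i j *: 'X^2 + M1 i j *: 'X + (M0 i j)%:P).

Lemma CpE s : map_mx (horner_eval s) Cp = Cf s.
Proof.
apply/matrixP => i j; rewrite !mxE horner_evalE !hornerE /=.
ring.
Qed.

Lemma CpEij s i j : (Cp i j).[s] = Cf s i j.
Proof. by have := congr1 (fun M : 'M_n => M i j) (CpE s); rewrite mxE. Qed.

Lemma detCE s : \det (Cf s) = (\det Cp).[s].
Proof. by rewrite -CpE det_map_mx. Qed.

Lemma adjCE s : \adj (Cf s) = map_mx (horner_eval s) (\adj Cp).
Proof. by rewrite -CpE map_mx_adj. Qed.

Definition hh i j := (\adj Cp) i j * \det Cp.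
Definition Gd s := [forall i, [forall j, 0 <= (hh i j).[s]]].

Lemma sgn_inv (a d : R) : d != 0 -> (0 <= d^-1 * a) = (0 <= a * d).
Proof.
move=> dn0; have -> : a * d = (d^-1 * a) * (d * d) by field.
have dd : 0 < d * d by rewrite lt_def mulf_neq0 //= -expr2 sqr_ge0.
by rewrite (pmulr_lge0 (d^-1 * a) dd).
Qed.

Lemma Gd_mono s : (\det Cp).[s] != 0 -> monotone (Cf s) <-> Gd s.
Proof.
move=> dn0; have Cu : Cf s \in unitmx by rewrite unitmxE unitfE detCE.
have invE : invmx (Cf s) = (\det (Cf s))^-1 *: \adj (Cf s) by rewrite /invmx Cu.
split.
  case=> _ /mxle0E h; apply/forallP => i; apply/forallP => j.
  move: (h i j); rewrite invE mxE adjCE mxE horner_evalE detCE sgn_inv //.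
  by rewrite /hh hornerM.
move=> /forallP G; split=> //; apply/mxle0E => i j.
move: (G i) => /forallP /(_ j).
by rewrite invE mxE adjCE mxE horner_evalE detCE sgn_inv // /hh hornerM.
Qed.

Definition Pi := \det Cp * \prod_(ij : 'I_n * 'I_n)
  (if hh ij.1 ij.2 == 0 then 1 else hh ij.1 ij.2).

Section Hyps.
Variables (a b : R).
Hypothesis hZ : forall s, a <= s <= b -> Zmx (Cf s).
Hypothesis hdet : forall s, a <= s <= b -> \det (Cf s) != 0.

Lemma local_down z w : a <= z -> z < w -> w <= b -> Gd w ->
  exists2 s0, z < s0 < w & Gd s0.
Proof.
move=> az zw wb Gw.
have dw : (\det Cp).[w] != 0 by rewrite -detCE hdet // (le_trans az (ltW zw)).
have [Mu /mxle0E Mi] := (Gd_mono dw).2 Gw.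
set K := invmx (Cf w) in Mi.
pose u : 'cV[R]_n := K *m const_mx 1.
have hu : forall i, 0 < u i 0.
  move=> i; rewrite mxE lt_def sumr_ge0 ?andbT; last first.
    by move=> j _; rewrite mxE mulr1.
  apply/negP => /eqP /psumr_eq0P H.
  have h1 : (K *m Cf w) i i = 1 by rewrite mulVmx // mxE eqxx.
  have h0 : (K *m Cf w) i i = 0.
    rewrite mxE big1 // => j _.
    have := H _ j isT; rewrite mxE mulr1 => ->; first by rewrite mul0r.
    by move=> k _; rewrite mxE mulr1.
  by move: h1; rewrite h0 => /eqP; rewrite eq_sym oner_eq0.
have hCu : Cf w *m u = const_mx 1 by rewrite mulmxA mulmxV // mul1mx.
pose pp i := (Cp *m map_mx polyC u) i 0.
have ppE : forall s i, (pp i).[s] = (Cf s *m u) i 0.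
  move=> s i; rewrite /pp [in LHS]mxE [in RHS]mxE horner_sum; apply: eq_bigr => j _.
  have -> : (map_mx polyC u) j 0 = (u j 0)%:P by rewrite mxE.
  by rewrite hornerM hornerC CpEij.
pose P2 := \prod_i pp i.
have P2w : P2.[w] = 1.
  by rewrite horner_prod; apply: big1 => i _; rewrite ppE hCu mxE.
have P2n0 : P2 != 0 by apply/negP => /eqP P0; move: P2w; rewrite P0 horner0 => /eqP; rewrite eq_sym oner_eq0.
set l := prev_root P2 z w.
have lin := prev_root_in P2 z w; rewrite -/l in lin.
have lw : l < w by apply: prev_root_lt.
have zl : z <= l by move: lin; rewrite in_itv /= (min_idPl (ltW zw)) => /andP[].
pose s0 := (l + w) / 2.
have ls0 : l < s0 by rewrite /s0; lra.
have s0w : s0 < w by rewrite /s0; lra.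
exists s0; first by apply/andP; split; lra.
have hpos : forall i, 0 < (Cf s0 *m u) i 0.
  move=> i; rewrite -ppE.
  have nr : {in `]l, w], noroot (pp i)}.
    move=> y; rewrite in_itv /= => /andP[ly yw].
    have [->|ne] := eqVneq y w; first by rewrite rootE ppE hCu mxE oner_eq0.
    have : ~~ root P2 y.
      by apply: (@prev_noroot _ P2 z w); rewrite in_itv /= -/l ly /= lt_neqAle ne yw.
    rewrite !rootE horner_prod prodf_seq_eq0 => /hasPn /(_ i).
    by rewrite mem_index_enum /= => /(_ isT).
  have := polyrN0_itv nr (y := w) (x := s0).
  rewrite !in_itv /= ls0 (ltW s0w) lw lexx => /(_ isT isT).
  by rewrite ppE hCu mxE sgr1 => /esym/eqP; rewrite sgr_cp0.
have hmono : monotone (Cf s0).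
  apply: (zmin_mono (u := u)) => //; apply: hZ; apply/andP; split; lra.
by apply/(Gd_mono _).1 => //; rewrite -detCE hdet //; apply/andP; split; lra.
Qed.

Lemma close_down z w s0 : a <= z -> z < s0 -> s0 < w -> w <= b ->
  {in `]z, w[, noroot Pi} -> Gd s0 -> Gd z.
Proof.
move=> az zs0 s0w wb nr /forallP G; apply/forallP => i; apply/forallP => j.
set q := hh i j.
have [q0|qn0] := eqVneq q 0; first by rewrite q0 horner0.
have nrq : {in `]z, w[, noroot q}.
  move=> y hy; have := nr y hy; apply: contra.
  rewrite !rootE => /eqP hq; rewrite /Pi hornerM horner_prod.
  rewrite mulf_eq0; apply/orP; right; rewrite prodf_seq_eq0; apply/hasP.
  exists (i, j); first by rewrite mem_index_enum.
  by rewrite /= -/q (negPf qn0) hq eqxx.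
have qs0 : 0 < q.[s0].
  rewrite lt_def; move: (G i) => /forallP /(_ j) ->; rewrite andbT.
  by have := nrq s0; rewrite rootE in_itv /= zs0 s0w => /(_ isT).
have [qz0|qzn0] := eqVneq q.[z] 0; first by rewrite qz0.
have nrq' : {in `[z, s0], noroot q}.
  move=> y; rewrite in_itv /= => /andP[zy ys0].
  have [<-|ne] := eqVneq z y; first by rewrite rootE qzn0.
  apply: nrq; rewrite in_itv /= lt_neqAle ne zy /=; lra.
have := polyrN0_itv nrq' (x := z) (y := s0).
rewrite !in_itv /= lexx (ltW zs0) lexx => /(_ isT isT).
by rewrite (gtr0_sg qs0) => /esym/eqP; rewrite sgr_cp0 => /ltW.
Qed.

Lemma cont : a <= b -> monotone (Cf b) -> monotone (Cf a).
Proof.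
move=> ab Mb.
have hab s : a <= s <= b -> (\det Cp).[s] != 0 by move=> h; rewrite -detCE hdet.
have Gb : Gd b by apply/(Gd_mono (hab b _)).1 => //; rewrite ab lexx.
suff Ga : Gd a by apply/(Gd_mono (hab a _)).2 => //; rewrite ab lexx.
have [eab|ltab] := eqVneq a b; first by rewrite eab.
have ltab' : a < b by rewrite lt_neqAle ltab ab.
have detn0 : \det Cp != 0.
  apply/negP => /eqP d0; have := hab b; rewrite d0 horner0 eqxx ab lexx.
  by move=> /(_ isT).
have Pin0 : Pi != 0.
  rewrite /Pi mulf_neq0 // prodf_seq_neq0; apply/allP => ij _ /=.
  by case: ifP => [_|/negbT //]; apply: oner_neq0.
apply/negPn/negP => Ga.
pose L := [seq x <- roots Pi a b | ~~ Gd x].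
pose z := foldr Num.max a L.
have zmem := foldr_max_mem a L; rewrite -/z in zmem.
have zub : forall y, y \in L -> y <= z by move=> y; apply: foldr_max_ub.
have az : a <= z := foldr_max_lb a L.
have zbad : ~~ Gd z.
  by case/orP: zmem => [/eqP ->|] //; rewrite mem_filter => /andP[].
have zb : z < b.
  case/orP: zmem => [/eqP ->|] //; rewrite mem_filter => /andP[_].
  by rewrite in_roots => /and3P[_ + _]; rewrite in_itv /= => /andP[].
set w := next_root Pi z b.
have zw : z < w := next_root_gt zb Pin0.
have wb : w <= b.
  have := next_root_in Pi z b; rewrite -/w in_itv /= (max_l (ltW zb)).
  by move=> /andP[].
have Gw : Gd w.
  rewrite /w; case: next_rootP => [P0 | y _ py0 hy _ | c _ hc _].
  - by rewrite P0 eqxx in Pin0.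
  - apply/negPn/negP => Gy; move: hy; rewrite in_itv /= => /andP[zy yb].
    have yL : y \in L.
      rewrite mem_filter Gy /= in_roots rootE py0 eqxx Pin0 andbT /=.
      rewrite in_itv /= yb andbT; lra.
    by have := zub y yL; lra.
  - by rewrite hc (max_l (ltW zb)).
have [s0 /andP[zs0 s0w] Gs0] := local_down az zw wb Gw.
have := close_down az zs0 s0w wb (@next_noroot _ Pi z b) Gs0.
by rewrite (negPf zbad).
Qed.

End Hyps.
End Cont.

Local Open Scope complex_scope.
Local Open Scope ring_scope.


Section Spec.
Variable R : rcfType.

Lemma inlistE m (A : 'M[R]_m) z :
  (z \in sval (closed_field_poly_normal (char_poly (cplx_mx A)))) =
  root (char_poly (cplx_mx A)) z.
Proof.
case: closed_field_poly_normal => r /= hr.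
by rewrite [in RHS]hr (monicP (char_poly_monic _)) scale1r root_prod_XsubC.
Qed.

Lemma le_rho m (A : 'M[R]_m) z :
  root (char_poly (cplx_mx A)) z -> complex.Re `|z| <= spectral_radius A.
Proof.
rewrite -inlistE /spectral_radius; elim: (sval _) => // a r IH.
rewrite big_cons in_cons => /orP[/eqP ->|h]; first by rewrite le_max lexx.
by rewrite le_max IH // orbT.
Qed.

Lemma rho_ge0 m (A : 'M[R]_m) : 0 <= spectral_radius A.
Proof.
by rewrite /spectral_radius; elim/big_rec: _ => // z x _ hx; rewrite le_max hx orbT.
Qed.

Lemma rho_le m (A : 'M[R]_m) c : 0 <= c ->
  (forall z, root (char_poly (cplx_mx A)) z -> complex.Re `|z| <= c) ->
  spectral_radius A <= c.
Proof.
move=> c0 h; rewrite /spectral_radius big_seq; apply: bigmax_le => // z.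
by rewrite inlistE; apply: h.
Qed.

Lemma rho_lt m (A : 'M[R]_m) c : 0 < c ->
  (forall z, root (char_poly (cplx_mx A)) z -> complex.Re `|z| < c) ->
  spectral_radius A < c.
Proof.
move=> c0 h; rewrite /spectral_radius big_seq; apply: bigmax_lt => // z.
by rewrite inlistE; apply: h.
Qed.

Lemma real_eig_root m (A : 'M[R]_m) (x : 'rV[R]_m) (b : R) :
  x != 0 -> x *m A = b *: x -> root (char_poly (cplx_mx A)) b%:C.
Proof.
move=> xn0 hx; rewrite -eigenvalue_root_char; apply/eigenvalueP.
exists (map_mx (real_complex R) x); last by rewrite map_mx_eq0.
by rewrite /cplx_mx -map_mxM hx map_mxZ.
Qed.

Lemma real_eig_spec m (A : 'M[R]_m) (x : 'rV[R]_m) (b : R) :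
  x != 0 -> x *m A = b *: x -> b%:C \in spectrum A.
Proof. by move=> xn0 hx; rewrite inE eigenvalue_root_char; apply: real_eig_root hx. Qed.

Lemma normC_re (c : R[i]) : (complex.Re `|c|)%:C = `|c|.
Proof. by rewrite RRe_real // normr_real. Qed.

Lemma re_norm_ge0 (c : R[i]) : 0 <= complex.Re `|c|.
Proof. by rewrite -ler0c normC_re. Qed.

Lemma eig_abs m (T : 'M[R]_m) z : nnm T -> root (char_poly (cplx_mx T)) z ->
  exists2 w : 'rV[R]_m, nnm w /\ w != 0 &
    forall j, complex.Re `|z| * w 0 j <= (w *m T) 0 j.
Proof.
move=> hT; rewrite -eigenvalue_root_char => /eigenvalueP [v hv vn0].
pose w : 'rV[R]_m := \row_j complex.Re `|v 0 j|.
exists w.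
  split; first by move=> i j; rewrite mxE re_norm_ge0.
  apply: contraNneq vn0 => w0; apply/eqP/matrixP => i j.
  have := congr1 (fun M : 'rV_m => M i j) w0; rewrite !mxE ord1 => h.
  by apply/eqP; rewrite -normr_eq0 -normC_re h.
move=> j; rewrite -lecR rmorphM /= !mxE normC_re rmorph_sum /=.
have := congr1 (fun M : 'rV_m => M 0 j) hv; rewrite !mxE => hv'.
rewrite -normrM -hv' (le_trans (ler_norm_sum _ _ _)) //.
apply: ler_sum => i _; rewrite !mxE rmorphM /= normC_re normrM ler_pM //.
by rewrite ger0_norm // ler0c.
Qed.

End Spec.


Lemma nnm_block (R : realFieldType) m1 m2 n1 n2 (A : 'M[R]_(m1, n1)) (B : 'M[R]_(m1, n2))
  (C : 'M[R]_(m2, n1)) (D : 'M[R]_(m2, n2)) :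
  nnm A -> nnm B -> nnm C -> nnm D -> nnm (block_mx A B C D).
Proof.
move=> hA hB hC hD i j; rewrite -(splitK i) -(splitK j).
case: (split i) => i'; case: (split j) => j' /=.
- by rewrite block_mxEul.
- by rewrite block_mxEur.
- by rewrite block_mxEdl.
- by rewrite block_mxEdr.
Qed.

Section Block.
Variables (R : rcfType) (n : nat) (B11 B12 : 'M[R]_n).
Hypotheses (h11 : nnm B11) (h12 : nnm B12).

Definition Tb : 'M[R]_(n + n) := block_mx B11 B12 1%:M 0.
Definition Qb (s : R) : 'M[R]_n := s ^+ 2 *: 1%:M - s *: B11 - B12.

Lemma Tb_nn : nnm Tb.
Proof. by apply: nnm_block => //; [apply: nnm1 | apply: nnm0]. Qed.

Lemma xQE (x : 'rV[R]_n) s : x *m Qb s = s ^+ 2 *: x - s *: (x *m B11) - x *m B12.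
Proof. by rewrite /Qb !mulmxBr -!scalemxAr mulmx1. Qed.

Lemma xQEj (x : 'rV[R]_n) s j :
  (x *m Qb s) 0 j = s ^+ 2 * x 0 j - s * (x *m B11) 0 j - (x *m B12) 0 j.
Proof. by rewrite xQE !mxE. Qed.

Lemma oppE (M : 'rV[R]_n) j : (- M) 0 j = - M 0 j.
Proof. by rewrite mxE. Qed.

Lemma blk_eig z : root (char_poly (cplx_mx Tb)) z -> 0 < complex.Re `|z| ->
  exists x : 'rV[R]_n, [/\ nnm x, x != 0 & nnm (- (x *m Qb (complex.Re `|z|)))].
Proof.
move=> rz a0; set a := complex.Re `|z| in a0 *.
have [w [wnn wn0] hw] := eig_abs Tb_nn rz; rewrite -/a in hw.
pose x := lsubmx w; pose y := rsubmx w.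
have wE : w = row_mx x y by rewrite hsubmxK.
have hT : w *m Tb = row_mx (x *m B11 + y) (x *m B12).
  by rewrite wE /Tb mul_row_block mulmx1 mulmx0 addr0.
have h1 : forall j, a * x 0 j <= (x *m B11) 0 j + y 0 j.
  move=> j; have := hw (lshift n j); rewrite hT row_mxEl {1}wE row_mxEl.
  by have -> : (x *m B11 + y) 0 j = (x *m B11) 0 j + y 0 j by rewrite mxE.
have h2 : forall j, a * y 0 j <= (x *m B12) 0 j.
  by move=> j; have := hw (rshift n j); rewrite hT row_mxEr {1}wE row_mxEr.
have xnn : nnm x by move=> i j; rewrite mxE.
have ynn : nnm y by move=> i j; rewrite mxE.
exists x; split => //.
  apply: contraNneq wn0 => x0; rewrite wE x0.
  have -> : y = 0.
    apply/matrixP => i j; rewrite ord1; have yj := ynn 0 j.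
    have := h2 j; rewrite x0 mul0mx !mxE => h; move: yj; rewrite !mxE => yj.
    apply/le_anti; apply/andP; split; nra.
  by rewrite row_mx0.
move=> i j; rewrite ord1 oppE xQEj.
have := h1 j; have := h2 j; have := xnn 0 j; have := ynn 0 j.
move=> ??? ?; nra.
Qed.

Lemma blk_Q_eig s (x : 'rV[R]_n) : 0 < s -> x != 0 -> x *m Qb s = 0 ->
  root (char_poly (cplx_mx Tb)) s%:C.
Proof.
move=> s0 xn0 hx; apply: (@real_eig_root _ _ _ (row_mx x (s^-1 *: (x *m B12)))).
  apply/negP => /eqP h; move/eqP: xn0; apply.
  by move: h; rewrite -row_mx0 => /eq_row_mx [].
rewrite /Tb mul_row_block mulmx1 mulmx0 addr0 scale_row_mx; congr row_mx.
  move: hx; rewrite xQE => /eqP; rewrite !subr_eq0 => /eqP hx.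
  apply: (@scalerI _ _ s); first by rewrite gt_eqF.
  rewrite scalerDr scalerA divff ?gt_eqF // scale1r scalerA -expr2 -hx.
  by rewrite addrC subrK.
by rewrite scalerA divff ?gt_eqF // scale1r.
Qed.

Lemma blk_Q_unit s : spectral_radius Tb < s -> Qb s \in unitmx.
Proof.
move=> hs; have s0 : 0 < s by apply: le_lt_trans (rho_ge0 _) hs.
rewrite unitmxE unitfE; apply/negP => /det0P [x xn0 hx].
have := le_rho (blk_Q_eig s0 xn0 hx).
rewrite ger0_norm; last by rewrite ler0c ltW.
move=> /= h; lra.
Qed.

Lemma blk_rho_lt1 : (forall x : 'rV[R]_n, nnm x -> nnm (- (x *m Qb 1)) -> x = 0) ->
  spectral_radius Tb < 1.
Proof.
move=> hk; apply: rho_lt => // z rz; rewrite ltNge; apply/negP => a1.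
have a0 : 0 < complex.Re `|z| by lra.
have [x [xnn xn0 hx]] := blk_eig rz a0.
move: xn0; rewrite (hk x xnn) ?eqxx //.
move=> i j; move: (hx i j); rewrite ord1 !oppE !xQEj.
have := nnm_mul xnn h11 0 j; have := nnm_mul xnn h12 0 j; have := xnn 0 j.
move: (complex.Re `|z|) a1 => a a1 hx0 hc hb H.
set X := x 0 j in hx0 H *; set B := (x *m B11) 0 j in hb H *.
set Cc := (x *m B12) 0 j in hc H *.
have t1 : 0 <= a * (a - 1) * B by rewrite !mulr_ge0 //; lra.
have t2 : 0 <= (a ^+ 2 - 1) * Cc by rewrite mulr_ge0 // subr_ge0 -[1](expr1n _ 2) lerXn2r // ?nnegrE; lra.
have t3 : a ^+ 2 * (X - B - Cc) <= 0 by rewrite expr2 in t2 H *; nra.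
have a2 : 0 < a ^+ 2 by rewrite exprn_gt0 //; lra.
rewrite oppr_ge0; move: t3; rewrite pmulr_rle0 //. by rewrite expr1n !mul1r.
Qed.

Lemma blk_rho_le c : spectral_radius Tb < 1 -> 0 <= c ->
  (forall a, c < a -> a < 1 -> forall x : 'rV[R]_n, nnm x ->
       nnm (- (x *m Qb a)) -> x = 0) ->
  spectral_radius Tb <= c.
Proof.
move=> hr c0 hk; apply: rho_le => // z rz; rewrite leNgt; apply/negP => ca.
have a0 : 0 < complex.Re `|z| by lra.
have a1 : complex.Re `|z| < 1 by apply: le_lt_trans (le_rho rz) hr.
have [x [xnn xn0 hx]] := blk_eig rz a0.
by move: xn0; rewrite (hk _ ca a1 x xnn hx) eqxx.
Qed.

End Block.


Lemma row_pos (R : realFieldType) n (M : 'M[R]_n) : M \in unitmx -> nnm M ->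
  forall i, 0 < (M *m (const_mx 1 : 'cV_n)) i 0.
Proof.
move=> Mu Mi i; rewrite mxE lt_def sumr_ge0 ?andbT; last first.
  by move=> j _; rewrite mxE mulr1.
apply/negP => /eqP /psumr_eq0P H.
have h1 : (M *m invmx M) i i = 1 by rewrite mulmxV // mxE eqxx.
have h0 : (M *m invmx M) i i = 0.
  rewrite mxE big1 // => j _.
  have := H _ j isT; rewrite mxE mulr1 => ->; first by rewrite mul0r.
  by move=> k _; rewrite mxE mulr1.
by move: h1; rewrite h0 => /eqP; rewrite eq_sym oner_eq0.
Qed.

Lemma mono1 (R : realFieldType) n : monotone (1%:M : 'M[R]_n).
Proof. by split; [apply: unitmx1 | rewrite invmx1; apply/mxle0E/nnm1]. Qed.

Lemma Qb1 (R : rcfType) n (B11 B12 : 'M[R]_n) : Qb B11 B12 1 = 1%:M - B11 - B12.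
Proof. by rewrite /Qb expr1n !scale1r. Qed.

Lemma Zmx_Q (R : rcfType) n (X Y : 'M[R]_n) s : 0 <= s -> nnm X -> nnm (- Y) ->
  Zmx (s ^+ 2 *: 1%:M + s *: - X + Y).
Proof.
move=> s0 hX hY i j ij; rewrite !mxE (negPf ij) mulr0 add0r.
have := hX i j; have := hY i j; rewrite mxE => ??; nra.
Qed.

Lemma Zmx_C2 (R : rcfType) n (U V : 'M[R]_n) s : 0 <= s -> s <= 1 -> nnm U -> nnm (- V) ->
  Zmx (s ^+ 2 *: (1%:M + U - V) + s *: - U + V).
Proof.
move=> s0 s1 hU hV i j ij; rewrite !mxE (negPf ij) add0r.
have := hU i j; have := hV i j; rewrite mxE => h1 h2.
set u := U i j in h2 *; set v := V i j in h1 *.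
have t1 : (s ^+ 2 - s) * u <= 0 by rewrite mulr_le0_ge0 // expr2; nra.
have t2 : (1 - s ^+ 2) * v <= 0 by rewrite mulr_ge0_le0 // ?expr2; nra.
have -> : s ^+ 2 * (u - v) + s * - u + v = (s ^+ 2 - s) * u + (1 - s ^+ 2) * v by ring.
lra.
Qed.

Lemma E2gen (R : rcfType) n (x : 'rV[R]_n) (Q D Y N QW : 'M[R]_n) :
  QW = Q + D - Y *m Q -> Q *m N = 1%:M ->
  - x = - (x *m QW) *m N + x *m D *m N + x *m (- Y).
Proof.
move=> -> QN.
rewrite mulNmx !mulmxDr ?mulmxBr !mulmxN !mulmxDl ?mulmxBl !mulNmx -!mulmxA QN !mulmx1.
move: (x *m (D *m N)) (x *m Y) => u v.
by apply/matrixP => i j; rewrite !mxE; ring.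
Qed.

Section Main.
Variables (R : rcfType) (n : nat) (A P1 R1 S1 P2 R2 S2 : 'M[R]_n).
Local Notation X1 := (invmx P1 *m R1).
Local Notation Y1 := (invmx P1 *m S1).
Local Notation X2 := (invmx P2 *m R2).
Local Notation Y2 := (invmx P2 *m S2).
Hypotheses (Au : A \in unitmx) (Ai : nnm (invmx A)).
Hypotheses (eqA1 : A = P1 - R1 + S1) (P1u : P1 \in unitmx) (P1i : nnm (invmx P1))
  (X1nn : nnm X1) (Y1np : nnm (- Y1)).
Hypotheses (eqA2 : A = P2 - R2 + S2) (P2u : P2 \in unitmx) (P2i : nnm (invmx P2))
  (R2nn : nnm R2) (S2np : nnm (- S2)).
Hypothesis hU : (1%:M - S2 *m invmx P1) \in unitmx.
Hypotheses (hX : nnm (X1 - X2)) (hY : nnm (Y2 - Y1)).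

Lemma Y2np : nnm (- Y2).
Proof. by rewrite -mulmxN; apply: nnm_mul. Qed.

Lemma X2nn : nnm X2.
Proof. exact: nnm_mul. Qed.

Lemma I1 : invmx P1 *m A = 1%:M - X1 + Y1.
Proof. by rewrite eqA1 mulmxDr mulmxBr mulVmx. Qed.

Lemma I2 : invmx P2 *m A = 1%:M - X2 + Y2.
Proof. by rewrite eqA2 mulmxDr mulmxBr mulVmx. Qed.

Lemma rho2_lt1 : spectral_radius (Tb X2 (- Y2)) < 1.
Proof.
apply: (blk_rho_lt1 X2nn Y2np) => x xnn.
rewrite Qb1 opprK -I2 mulmxA => hx.
have ynn : nnm (x *m invmx P2) by apply: nnm_mul.
have y0 : x *m invmx P2 = 0.
  apply: nnm_anti => //.
  have -> : - (x *m invmx P2) = (- (x *m invmx P2 *m A)) *m invmx A.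
    by rewrite mulNmx mulmxK.
  exact: nnm_mul.
by rewrite -(mulmxKV P2u x) y0 mul0mx.
Qed.

Local Notation BW11 := (X2 - Y2 *m X1).
Local Notation BW12 := (Y2 *m Y1).

Lemma BW11nn : nnm BW11.
Proof.
have -> : X2 - Y2 *m X1 = X2 + (- Y2) *m X1 by rewrite mulNmx.
exact: (nnm_add X2nn (nnm_mul Y2np X1nn)).
Qed.

Lemma BW12nn : nnm BW12.
Proof.
have -> : Y2 *m Y1 = (- Y2) *m (- Y1) by rewrite mulNmx mulmxN opprK.
exact: (nnm_mul Y2np Y1np).
Qed.

Lemma QW1E : Qb BW11 BW12 1 = (invmx P2 - Y2 *m invmx P1) *m A.
Proof.
rewrite Qb1 mulmxBl -[Y2 *m invmx P1 *m A]mulmxA I1 I2 mulmxDr mulmxBr mulmx1.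
move: (Y2 *m X1) (Y2 *m Y1) => u v; move: X1 X2 Y1 Y2 => a b c d.
by apply/matrixP => i j; rewrite !mxE; ring.
Qed.

Lemma rhoW_lt1 : spectral_radius (Tb BW11 BW12) < 1.
Proof.
apply: (blk_rho_lt1 BW11nn BW12nn) => x xnn.
rewrite QW1E mulmxA => hx.
set U := invmx P2 - Y2 *m invmx P1.
have ynn : nnm (x *m U).
  have -> : x *m U = x *m invmx P2 + (x *m (- Y2)) *m invmx P1.
    by rewrite /U mulmxBr mulmxN mulNmx !mulmxA.
  exact: (nnm_add (nnm_mul xnn P2i) (nnm_mul (nnm_mul xnn Y2np) P1i)).
have y0 : x *m U = 0.
  apply: nnm_anti => //.
  have -> : - (x *m U) = (- (x *m U *m A)) *m invmx A by rewrite mulNmx mulmxK.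
  exact: nnm_mul.
have Uu : U \in unitmx.
  have -> : U = invmx P2 *m (1%:M - S2 *m invmx P1).
    by rewrite /U mulmxBr mulmx1 !mulmxA.
  by rewrite unitmx_mul unitmx_inv P2u hU.
by rewrite -(mulmxK Uu x) y0 mul0mx.
Qed.

Lemma Q1E s : Qb X1 (- Y1) s = Cf 1%:M (- X1) Y1 s.
Proof. by rewrite /Qb /Cf opprK scalerN. Qed.

Lemma Q1_mono1 : monotone (Qb X1 (- Y1) 1).
Proof.
apply: (zmin_mono (u := invmx A *m (const_mx 1 : 'cV_n))).
- by rewrite Q1E; apply: Zmx_Q.
- by apply: row_pos => //; rewrite unitmx_inv.
- move=> i; rewrite Qb1 opprK -I1 mulmxA -[invmx P1 *m A *m invmx A]mulmxA.
  by rewrite mulmxV // mulmx1; apply: row_pos => //; rewrite unitmx_inv.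
Qed.

Lemma rhoW_le1 : spectral_radius (Tb BW11 BW12) <= spectral_radius (Tb X1 (- Y1)).
Proof.
apply: (blk_rho_le BW11nn BW12nn rhoW_lt1 (rho_ge0 _)) => a ca a1 x xnn hx.
have r0 := rho_ge0 (Tb X1 (- Y1)).
have a0 : 0 < a by lra.
have M1 : monotone (Qb X1 (- Y1) a).
  rewrite Q1E; apply: (cont (a := a) (b := 1)) => [s /andP[sa s1]| s /andP[sa s1] | |].
  - by apply: Zmx_Q => //; lra.
  - rewrite -Q1E -unitfE -unitmxE; apply: blk_Q_unit; lra.
  - exact: ltW.
  - by rewrite -Q1E; apply: Q1_mono1.
set N := invmx (Qb X1 (- Y1) a).
have [Qu /mxle0E Nnn] := M1.
set D := a *: (X1 - X2) + (Y2 - Y1) + (1 - a ^+ 2) *: (- Y2).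
have Dnn : nnm D.
  apply: nnm_add; first apply: nnm_add => //.
  - by apply: nnm_scale => //; lra.
  - apply: nnm_scale; last exact: Y2np.
    by rewrite subr_ge0 expr2; nra.
have E : Qb BW11 BW12 a = Qb X1 (- Y1) a + D - Y2 *m Qb X1 (- Y1) a.
  rewrite /D /Qb !mulmxBr !mulmxN -!scalemxAr mulmx1.
  move: (Y2 *m X1) (Y2 *m Y1) => u v; move: X1 X2 Y1 Y2 => p q r t.
  by apply/matrixP => i j; rewrite !mxE; ring.
have E2 : - x = - (x *m Qb BW11 BW12 a) *m N + x *m D *m N + x *m (- Y2).
  have QN : Qb X1 (- Y1) a *m N = 1%:M by rewrite /N mulmxV.
  exact: (E2gen x E QN).
apply: nnm_anti => //; rewrite E2; apply: nnm_add; first apply: nnm_add.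
- exact: nnm_mul.
- by apply: nnm_mul => //; apply: nnm_mul.
- by apply: nnm_mul => //; apply: Y2np.
Qed.

Lemma rhoW_le2 : spectral_radius (Tb BW11 BW12) <= spectral_radius (Tb X2 (- Y2)).
Proof.
apply: (blk_rho_le BW11nn BW12nn rhoW_lt1 (rho_ge0 _)) => a ca a1 x xnn hx.
have r0 := rho_ge0 (Tb X2 (- Y2)).
have a0 : 0 < a by lra.
set U := R2 *m invmx A; set V := S2 *m invmx A.
have Unn : nnm U := nnm_mul R2nn Ai.
have Vnp : nnm (- V) by rewrite /V -mulNmx; apply: nnm_mul.
have PX : P2 *m X2 = R2 by rewrite mulmxA mulmxV // mul1mx.
have PY : P2 *m Y2 = S2 by rewrite mulmxA mulmxV // mul1mx.
have PA : P2 *m invmx A = 1%:M + U - V.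
  have -> : P2 = A + R2 - S2.
    rewrite eqA2; move: P2 R2 S2 => p q r.
    by apply/matrixP => i j; rewrite !mxE; ring.
  by rewrite mulmxBl mulmxDl mulmxV.
have CE : forall s, Cf (P2 *m invmx A) (- U) V s = P2 *m Qb X2 (- Y2) s *m invmx A.
  move=> s; rewrite /Cf /Qb opprK mulmxDr mulmxBr -!scalemxAr mulmx1 PX PY.
  by rewrite mulmxDl mulmxBl -!scalemxAl /U /V scalerN.
have MC : monotone (Cf (P2 *m invmx A) (- U) V a).
  apply: (cont (a := a) (b := 1)) => [s /andP[sa s1]| s /andP[sa s1] | |].
  - rewrite PA; apply: Zmx_C2 => //; lra.
  - rewrite CE -unitfE -unitmxE !unitmx_mul P2u unitmx_inv Au andbT /=.
    apply: blk_Q_unit; lra.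
  - exact: ltW.
  - by rewrite CE Qb1 opprK -I2 mulmxA mulmxV // mul1mx mulmxV //; apply: mono1.
set y := x *m invmx P2.
have ynn : nnm y := nnm_mul xnn P2i.
have E : Qb X2 (- Y2) a = Qb BW11 BW12 a + Y2 *m (invmx P1 *m A + (1 - a) *: X1).
  rewrite I1 /Qb opprK !mulmxDr ?mulmxBr !mulmxN mulmx1 -!scalemxAr.
  move: (Y2 *m X1) (Y2 *m Y1) => u v; move: X1 X2 Y1 Y2 => p q r t.
  by apply/matrixP => i j; rewrite !mxE; ring.
have E3 : (Y2 *m (invmx P1 *m A + (1 - a) *: X1)) *m invmx A =
          Y2 *m (invmx P1 + (1 - a) *: (X1 *m invmx A)).
  by rewrite -[LHS]mulmxA mulmxDl (mulmxK Au) -scalemxAl.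
have key : y *m Cf (P2 *m invmx A) (- U) V a =
   (x *m Qb BW11 BW12 a) *m invmx A +
   x *m (Y2 *m (invmx P1 + (1 - a) *: (X1 *m invmx A))).
  rewrite CE /y [in LHS]mulmxA [X in X *m invmx A = _]mulmxA (mulmxKV P2u) E (mulmxDr x) (mulmxDl _ _ (invmx A)).
  by congr (_ + _); rewrite -(mulmxA x) E3.
have hy : nnm (- (y *m Cf (P2 *m invmx A) (- U) V a)).
  have -> : - (y *m Cf (P2 *m invmx A) (- U) V a) =
    (- (x *m Qb BW11 BW12 a)) *m invmx A +
    (x *m (- Y2)) *m (invmx P1 + (1 - a) *: (X1 *m invmx A)).
    rewrite key opprD mulNmx mulmxN mulNmx [in LHS](mulmxA x).
    by congr (_ - _).
  apply: nnm_add; first exact: nnm_mul.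
  apply: nnm_mul; first exact: (nnm_mul xnn Y2np).
  apply: nnm_add => //; apply: nnm_scale; first lra.
  exact: nnm_mul.
have y0 := mono_kill MC ynn hy.
have -> : x = y *m P2 by rewrite /y mulmxKV.
by rewrite y0 mul0mx.
Qed.

Lemma main_sec :
  spectral_radius (Tb BW11 BW12) <=
    Num.min (spectral_radius (Tb X1 (- Y1))) (spectral_radius (Tb X2 (- Y2))) /\
  Num.min (spectral_radius (Tb X1 (- Y1))) (spectral_radius (Tb X2 (- Y2))) < 1.
Proof.
have h1 := rhoW_le1. have h2 := rhoW_le2. have h3 := rho2_lt1.
split.
rewrite le_min.
apply/andP; split.
exact h1.
exact h2.
rewrite gt_min.
apply/orP; right.
exact h3.
Qed.
End Main.

Close Scope complex_scope.
Local Open Scope ring_scope.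
Unset Implicit Arguments.

Theorem corollary3p7 (R : rcfType) (n : nat) (A P1 R1 S1 P2 R2 S2 : 'M[R]_n) :
  monotone A ->
  double_weak_regular_splitting A P1 R1 S1 ->
  double_regular_splitting A P2 R2 S2 ->
  ~ (1 \in spectrum (S2 *m invmx P1)) ->
  mxle 0 (invmx ((1%:M - S2 *m invmx P1) *m A)) ->
  mxle (invmx P2 *m R2) (invmx P1 *m R1) ->
  mxle (invmx P1 *m S1) (invmx P2 *m S2) ->
  let W12 : 'M[R]_(n + n) :=
    block_mx (invmx P2 *m R2 - invmx P2 *m S2 *m invmx P1 *m R1)
             (invmx P2 *m S2 *m invmx P1 *m S1) 1%:M 0 in
  let T1 : 'M[R]_(n + n) := block_mx (invmx P1 *m R1) (- (invmx P1 *m S1)) 1%:M 0 in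
  let T2 : 'M[R]_(n + n) := block_mx (invmx P2 *m R2) (- (invmx P2 *m S2)) 1%:M 0 in
  spectral_radius W12 <= Num.min (spectral_radius T1) (spectral_radius T2) /\
  Num.min (spectral_radius T1) (spectral_radius T2) < 1.
Proof.
move=> [Au /mxle0E Ai] [[eqA1 P1u] [/mxle0E P1i [/mxle0E X1nn /nnm_opp_le Y1np]]].
move=> [[eqA2 P2u] [/mxle0E P2i [/mxle0E R2nn /nnm_opp_le S2np]]] hspec _.
move=> /mxleE hX /mxleE hY W12 T1 T2.
have hU : (1%:M - S2 *m invmx P1) \in unitmx.
  rewrite unitmxE unitfE; apply/negP => /det0P [v vn0 hv]; apply: hspec.
  have hv' : v *m (S2 *m invmx P1) = 1 *: v.
    move/eqP: hv; rewrite mulmxBr mulmx1 subr_eq0 scale1r => /eqP hv.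
    exact: esym.
  have := real_eig_spec vn0 hv'; rewrite rmorph1 => h; exact: h.
have eW : W12 = Tb (invmx P2 *m R2 - invmx P2 *m S2 *m (invmx P1 *m R1))
                   (invmx P2 *m S2 *m (invmx P1 *m S1)).
  rewrite /W12 /Tb !mulmxA; reflexivity.
rewrite eW.
have := main_sec Au Ai eqA1 P1u P1i X1nn Y1np eqA2 P2u P2i R2nn S2np hU hX hY.
move=> H; exact: H.
Qed.
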